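(* For every $k\ge2$ and every density operator $\rho$ (on a finite-dimensional multipartite system for the first identity, on $\mathbb{C}^d$ with a fixed orthonormal basis for the second), $$E_G^{(k)}(\rho)=\inf_{\varsigma\in\mathcal{P}^{(k-1)}}\big(1-F(\rho,\varsigma)\big),\qquad C_G^{(k)}(\rho)=\inf_{\sigma\in\mathcal{I}^{(k-1)}}\big(1-F(\rho,\sigma)\big),$$ where $F(\rho,\sigma)=\big(\mathrm{Tr}\sqrt{\sqrt\rho\,\sigma\sqrt\rho}\big)^2$.
   Context: A multipartite pure state is $k$-producible if it is a tensor product of factors each pertaining to at most $k$ parties; a mixed state is $k$-producible if it is a convex combination of $k$-producible pure states; $\mathcal{P}^{(k)}$ is the set of $k$-producible states. For a fixed orthonormal basis $\{|i\rangle\}$ of $\mathbb{C}^d$, the coherence rank of a pure state is its number of nonzero coefficients in this basis, the coherence number $\mathrm{CN}(\rho)$ is the minimum over pure-state decompositions $\rho=\sum_ip_i|\psi_i\rangle\langle\psi_i|$ of $\max_i$ of the coherence ranks, and $\mathcal{I}^{(k)}$ is the set of states with $\mathrm{CN}\le k$ (its pure states are those with coherence rank $\le k$). The geometric measures are defined for pure states by $E_G^{(k)}(|\psi\rangle)=\inf_{|\varsigma\rangle\in\mathcal{P}^{(k-1)}\text{ pure}}(1-|\langle\varsigma|\psi\rangle|^2)$, $C_G^{(k)}(|\psi\rangle)=\inf_{|\sigma\rangle\in\mathcal{I}^{(k-1)}\text{ pure}}(1-|\langle\sigma|\psi\rangle|^2)$, and for mixed states by the convex roof: $E_G^{(k)}(\rho)=\inf\sum_ip_iE_G^{(k)}(|\psi_i\rangle)$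 and $C_G^{(k)}(\rho)=\inf\sum_ip_iC_G^{(k)}(|\psi_i\rangle)$, infima over all pure-state decompositions $\rho=\sum_ip_i|\psi_i\rangle\langle\psi_i|$, $p_i\ge0$. *)

(* Defs.v *)
(* Complex numbers are modelled by an arbitrary
   numClosedFieldType C whose real part is Dedekind complete (hypothesis
   stated in the theorem); such C is (isomorphic to) the complex numbers. *)
From HB Require Import structures.
From mathcomp Require Import all_boot all_order all_algebra.
From Stdlib Require Import Classical ClassicalEpsilon.
Set Implicit Arguments. Unset Strict Implicit. Unset Printing Implicit Defensive.
Import Order.TTheory GRing.Theory Num.Theory.
Local Open Scope ring_scope.

Section QDefs.
Variable C : numClosedFieldType.

Definition is_glb (A : C -> Prop) (g : C) : Prop :=
  (forall x, A x -> g <= x) /\ (forall l, (forall x, A x -> l <= x) -> l <= g).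

Definition real_complete : Prop :=
  forall A : C -> Prop, (exists x, A x) -> (forall x, A x -> x \is Num.real) ->
    (exists l, forall x, A x -> l <= x) -> exists g, is_glb A g.

(* the infimum (chosen glb; 0 if none exists) *)
Definition infC (A : C -> Prop) : C :=
  match excluded_middle_informative (exists g, is_glb A g) with
  | left H => proj1_sig (constructive_indefinite_description _ H)
  | right _ => 0
  end.

Variable N : nat.

Definition adjmx (m p : nat) (M : 'M[C]_(m, p)) : 'M[C]_(p, m) :=
  (map_mx Num.conj M)^T.

Definition psd (M : 'M[C]_N) : Prop :=
  forall v : 'cV[C]_N, 0 <= (adjmx v *m M *m v) 0 0.

Definition density (rho : 'M[C]_N) : Prop := psd rho /\ \tr rho = 1.

Definition sqrtm (M : 'M[C]_N) : 'M[C]_N :=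
  match excluded_middle_informative (exists S, psd S /\ S *m S = M) with
  | left H => proj1_sig (constructive_indefinite_description _ H)
  | right _ => 0
  end.

Definition fidelity (rho sigma : 'M[C]_N) : C :=
  (\tr (sqrtm (sqrtm rho *m sigma *m sqrtm rho))) ^+ 2.

Definition inner (phi psi : 'cV[C]_N) : C := (adjmx phi *m psi) 0 0.

Definition normalized (psi : 'cV[C]_N) : Prop := inner psi psi = 1.

Definition proj (psi : 'cV[C]_N) : 'M[C]_N := psi *m adjmx psi.

Definition pure_decomp (rho : 'M[C]_N) (s : seq (C * 'cV[C]_N)) : Prop :=
  (forall pv, pv \in s -> 0 <= pv.1 /\ normalized pv.2) /\
  rho = \sum_(pv <- s) pv.1 *: proj pv.2.

Definition mixed_hull (S : 'cV[C]_N -> Prop) (sigma : 'M[C]_N) : Prop :=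
  exists s : seq (C * 'cV[C]_N),
    (forall pv, pv \in s -> 0 <= pv.1 /\ normalized pv.2 /\ S pv.2) /\
    \sum_(pv <- s) pv.1 = 1 /\
    sigma = \sum_(pv <- s) pv.1 *: proj pv.2.

Definition geo_pure (S : 'cV[C]_N -> Prop) (psi : 'cV[C]_N) : C :=
  infC (fun x => exists phi, S phi /\ normalized phi /\
                   x = 1 - `|inner phi psi| ^+ 2).

Definition geo_roof (S : 'cV[C]_N -> Prop) (rho : 'M[C]_N) : C :=
  infC (fun x => exists s, pure_decomp rho s /\
                   x = \sum_(pv <- s) pv.1 * geo_pure S pv.2).

Definition geo_fid (S : 'cV[C]_N -> Prop) (rho : 'M[C]_N) : C :=
  infC (fun x => exists sigma, mixed_hull S sigma /\ x = 1 - fidelity rho sigma).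

End QDefs.

Arguments is_glb {C}. Arguments infC {C}. Arguments adjmx {C m p}.
Arguments psd {C N}. Arguments density {C N}. Arguments sqrtm {C N}.
Arguments fidelity {C N}. Arguments inner {C N}. Arguments normalized {C N}.
Arguments proj {C N}. Arguments pure_decomp {C N}. Arguments mixed_hull {C N}.
Arguments geo_pure {C N}. Arguments geo_roof {C N}. Arguments geo_fid {C N}.

Unset Implicit Arguments.

(* n parties, party i has local dimension d i; computational basis of the
   total space is indexed by the finType prodT d, and the total space is
   C^#|prodT d| via enum_rank. *)
Definition prodT {n : nat} (d : 'I_n -> nat) : finType :=
  {dffun forall i : 'I_n, 'I_(d i)}.

(* psi is a tensor product of factors, each on a block of at most k parties:
   there is a partition P of the parties into blocks of size <= k and, for
   each block B, a vector phi B on the parties of B (a function of the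
   coordinates in B only) such that psi(x) = prod_B phi_B(x|_B). *)
Definition k_producible_pure {C : numClosedFieldType} {n : nat} (d : 'I_n -> nat)
    (k : nat) (psi : 'cV[C]_#|prodT d|) : Prop :=
  exists (P : {set {set 'I_n}}) (phi : {set 'I_n} -> prodT d -> C),
    partition P [set: 'I_n] /\
    (forall B, B \in P -> #|B| <= k)%N /\
    (forall B, B \in P -> forall x y : prodT d,
        (forall i, i \in B -> x i = y i) -> phi B x = phi B y) /\
    (forall x : prodT d, psi (enum_rank x) 0 = \prod_(B in P) phi B x).

(* pure states of k-producible form (normalization is imposed where used) *)
Definition E_G {C : numClosedFieldType} {n} (d : 'I_n -> nat) (k : nat)
    (rho : 'M[C]_#|prodT d|) : C :=
  geo_roof (k_producible_pure d k.-1) rho.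

Definition coh_rank {C : numClosedFieldType} {D : nat} (psi : 'cV[C]_D) : nat :=
  #|[set i : 'I_D | psi i 0 != 0]|.

Definition C_G {C : numClosedFieldType} {D : nat} (k : nat) (rho : 'M[C]_D) : C :=
  geo_roof (fun psi : 'cV[C]_D => (coh_rank psi <= k.-1)%N) rho.

(* Main.v *)
Require Import Defs.
From HB Require Import structures.
From mathcomp Require Import all_boot all_order all_algebra.
From mathcomp Require Import ring sesquilinear spectral.
From Stdlib Require Import Classical ClassicalEpsilon.
Set Implicit Arguments. Unset Strict Implicit. Unset Printing Implicit Defensive.
Import Order.TTheory GRing.Theory Num.Theory.
Local Open Scope ring_scope.

Section Basic.
Variable C : numClosedFieldType.

Lemma adjmxE m p (A : 'M[C]_(m, p)) i j : adjmx A i j = (A j i)^*.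
Proof. by rewrite /adjmx !mxE. Qed.

Lemma adjmxK m p (A : 'M[C]_(m, p)) : adjmx (adjmx A) = A.
Proof. by apply/matrixP=> i j; rewrite !adjmxE conjCK. Qed.

Lemma adjmx_mul m p q (A : 'M[C]_(m, p)) (B : 'M[C]_(p, q)) :
  adjmx (A *m B) = adjmx B *m adjmx A.
Proof.
apply/matrixP=> i j; rewrite /adjmx !mxE rmorph_sum; apply: eq_bigr => k _.
by rewrite !mxE rmorphM mulrC.
Qed.

Lemma adjmxD m p (A B : 'M[C]_(m, p)) : adjmx (A + B) = adjmx A + adjmx B.
Proof. by apply/matrixP=> i j; rewrite /adjmx !mxE rmorphD. Qed.

Lemma adjmxN m p (A : 'M[C]_(m, p)) : adjmx (- A) = - adjmx A.
Proof. by apply/matrixP=> i j; rewrite /adjmx !mxE rmorphN. Qed.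

Lemma adjmxB m p (A B : 'M[C]_(m, p)) : adjmx (A - B) = adjmx A - adjmx B.
Proof. by rewrite adjmxD adjmxN. Qed.

Lemma adjmxZ m p a (A : 'M[C]_(m, p)) : adjmx (a *: A) = a^* *: adjmx A.
Proof. by apply/matrixP=> i j; rewrite /adjmx !mxE rmorphM. Qed.

Lemma adjmx0 m p : adjmx (0 : 'M[C]_(m, p)) = 0.
Proof. by apply/matrixP=> i j; rewrite /adjmx !mxE rmorph0. Qed.

Lemma adjmx_sum m p I (r : seq I) (P : pred I) (F : I -> 'M[C]_(m, p)) :
  adjmx (\sum_(i <- r | P i) F i) = \sum_(i <- r | P i) adjmx (F i).
Proof.
elim: r => [|x r IH]; first by rewrite !big_nil adjmx0.
by rewrite !big_cons; case: (P x) => //; rewrite adjmxD IH.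
Qed.

Lemma adjmx1 n : adjmx (1%:M : 'M[C]_n) = 1%:M.
Proof. by apply/matrixP=> i j; rewrite /adjmx !mxE eq_sym rmorph_nat. Qed.

Lemma adjmx_diag n (d : 'rV[C]_n) : adjmx (diag_mx d) = diag_mx (map_mx Num.conj d).
Proof.
apply/matrixP=> i j; rewrite /adjmx !mxE eq_sym.
by case: eqP => [->|_]; rewrite ?mulr1n ?mulr0n ?rmorph0.
Qed.

Lemma tr_adjmx n (A : 'M[C]_n) : \tr (adjmx A) = (\tr A)^*.
Proof. by rewrite /mxtrace rmorph_sum; apply: eq_bigr => i _; rewrite adjmxE. Qed.

Lemma mul_adj_diag m p (A : 'M[C]_(m, p)) i :
  (A *m adjmx A) i i = \sum_j `|A i j| ^+ 2.
Proof. by rewrite mxE; apply: eq_bigr => j _; rewrite adjmxE normCK. Qed.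

Lemma mul_adj_diag_ge0 m p (A : 'M[C]_(m, p)) i : 0 <= (A *m adjmx A) i i.
Proof. by rewrite mul_adj_diag sumr_ge0 // => j _; rewrite exprn_ge0. Qed.

Lemma mul_adj_eq0 m p (A : 'M[C]_(m, p)) : A *m adjmx A = 0 -> A = 0.
Proof.
move=> H; apply/matrixP=> i j; rewrite mxE.
have := mul_adj_diag A i; rewrite H mxE => /esym/eqP.
rewrite psumr_eq0 => [/allP/(_ j (mem_index_enum _))|]; last by move=> k; rewrite exprn_ge0.
by rewrite expf_eq0 /= normr_eq0 => /eqP.
Qed.

End Basic.

Section Psd.
Variable C : numClosedFieldType.
Variable N : nat.

Definition qf (M : 'M[C]_N) (u v : 'cV[C]_N) : C := (adjmx u *m M *m v) 0 0.

Lemma qf_delta (M : 'M[C]_N) i j : qf M (delta_mx i 0) (delta_mx j 0) = M i j.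
Proof.
rewrite /qf -colE.
have -> : adjmx (delta_mx i 0 : 'cV[C]_N) = delta_mx 0 i.
  by apply/matrixP=> a b; rewrite /adjmx !mxE rmorph_nat andbC.
rewrite !mxE (bigD1 i) //= big1 => [|k /negbTE nk]; last by rewrite !mxE nk mul0r.
by rewrite !mxE !eqxx mul1r addr0.
Qed.

Lemma qf_expand (M : 'M[C]_N) u w c :
  qf M (u + c *: w) (u + c *: w) =
  qf M u u + c * qf M u w + c^* * qf M w u + c^* * c * qf M w w.
Proof.
rewrite /qf adjmxD adjmxZ !mulmxDl !mulmxDr -!scalemxAl -!scalemxAr !mxE.
by rewrite mulrA; ring.
Qed.

Lemma conj_aux (a b : C) : a^* + b^* = a + b ->
  (-'i) * a^* + 'i * b^* = 'i * a - 'i * b -> a^* = b.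
Proof.
move=> H1 H2.
have Hi : 'i * 'i = -1 :> C by rewrite -expr2 sqrCi.
have H3 : a^* - b^* = b - a.
  have E : a^* - b^* = 'i * ((-'i) * a^* + 'i * b^*) + (1 + 'i*'i) * (a^* - b^*) by ring.
  rewrite E H2 Hi subrr mul0r addr0.
  have E2 : 'i * ('i * a - 'i * b) = ('i * 'i) * (a - b) by ring.
  rewrite E2 Hi; ring.
have H4 : (a^* - b) * 2 = 0.
  have E : (a^* - b) * 2 = ((a^* + b^*) + (a^* - b^*)) - ((a + b) + (b - a)) by ring.
  by rewrite E H1 H3 subrr.
apply/eqP; rewrite -subr_eq0; move/eqP: H4; rewrite mulf_eq0 => /orP[//|].
by rewrite pnatr_eq0.
Qed.

Lemma psd_herm (M : 'M[C]_N) : psd M -> adjmx M = M.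
Proof.
move=> HM; apply/matrixP=> i j; rewrite adjmxE.
have Hr : forall v, qf M v v \is Num.real by move=> v; apply: ger0_real; apply: HM.
have := Hr (delta_mx i 0); have := Hr (delta_mx j 0).
have := Hr (delta_mx j 0 + 1 *: delta_mx i 0).
have := Hr (delta_mx j 0 + 'i *: delta_mx i 0).
rewrite !qf_expand !qf_delta !CrealE.
set a := M j i; set b := M i j; set x := M j j; set y := M i i.
move=> /eqP R2 /eqP R1 /eqP Rx /eqP Ry.
move: R1; rewrite !rmorphD !rmorphM !rmorph1 /= Rx Ry => R1. move: R2; rewrite !rmorphD !rmorphM /= conjCi rmorphN /= conjCi opprK Rx Ry => R2.
apply: conj_aux.
  have E : a^* + b^* = (x + 1 * a^* + 1 * b^* + 1 * 1 * y) - x - y by ring.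
  rewrite E R1; ring.
have E : (-'i) * a^* + 'i * b^* =
   (x + (-'i) * a^* + 'i * b^* + 'i * (-'i) * y) - x - ('i * (-'i)) * y by ring.
rewrite E R2; ring.
Qed.

End Psd.

Section Spec.
Variable C : numClosedFieldType.
Variable N : nat.

Definition spec (M U : 'M[C]_N) (d : 'rV[C]_N) :=
  U *m adjmx U = 1%:M /\ adjmx U *m U = 1%:M /\ (forall k, 0 <= d 0 k) /\
  M = adjmx U *m diag_mx d *m U.

Lemma tstar_adj m p (A : 'M[C]_(m, p)) : map_mx Num.conj (A ^T) = adjmx A.
Proof. by rewrite /adjmx map_trmx. Qed.

Lemma psd_spec (M : 'M[C]_N) : psd M -> exists U d, spec M U d.
Proof.
move=> HM; have Hh := psd_herm HM.
have Hn : M \is normalmx.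
  by apply/normalmxP; rewrite tstar_adj Hh.
move/orthomx_spectralP: Hn.
set U := spectralmx M; set d := spectral_diag M => HMe.
have Uu : U \is unitarymx by apply: spectral_unitarymx.
have UU : U *m adjmx U = 1%:M by rewrite -tstar_adj; apply/unitarymxP.
have UU' : adjmx U *m U = 1%:M by apply: mulmx1C.
have HMe' : M = adjmx U *m diag_mx d *m U by rewrite HMe invmx_unitary // tstar_adj.
exists U, d; split; [done|split; [done|split; [|done]]].
move=> k; have := HM (adjmx U *m delta_mx k 0).
rewrite -/(qf M (adjmx U *m delta_mx k 0) (adjmx U *m delta_mx k 0)).
have -> : qf M (adjmx U *m delta_mx k 0) (adjmx U *m delta_mx k 0) =
          qf (U *m M *m adjmx U) (delta_mx k 0) (delta_mx k 0).
  by rewrite /qf adjmx_mul adjmxK !mulmxA.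
rewrite qf_delta HMe' !mulmxA UU mul1mx -mulmxA UU mulmx1 mxE eqxx mulr1n.
done.
Qed.
End Spec.

Section Fmx.
Variable C : numClosedFieldType.
Variable N : nat.
Variables (U : 'M[C]_N) (d : 'rV[C]_N).
Hypothesis UU : U *m adjmx U = 1%:M.
Hypothesis UU' : adjmx U *m U = 1%:M.

Definition fmx (f : C -> C) := adjmx U *m diag_mx (map_mx f d) *m U.

Lemma diag_mul (a b : 'rV[C]_N) :
  diag_mx a *m diag_mx b = diag_mx (\row_k (a 0 k * b 0 k)).
Proof.
apply/matrixP=> i j; rewrite mul_diag_mx !mxE.
by case: eqP => [->|_]; rewrite ?mulr1n ?mulr0n ?mulr0.
Qed.

Lemma fmx_mul f g : fmx f *m fmx g = fmx (fun x => f x * g x).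
Proof.
rewrite /fmx !mulmxA -(mulmxA (adjmx U *m _) U (adjmx U)) UU mulmx1.
rewrite -(mulmxA (adjmx U) (diag_mx _) (diag_mx _)) diag_mul.
by congr (_ *m _ *m _); congr diag_mx; apply/matrixP=> i j; rewrite !mxE ord1.
Qed.

Lemma fmx_ext f g : (forall k, f (d 0 k) = g (d 0 k)) -> fmx f = fmx g.
Proof.
move=> H; rewrite /fmx; congr (_ *m _ *m _); congr diag_mx.
by apply/matrixP=> i j; rewrite !mxE ord1 H.
Qed.

Lemma fmxD f g : fmx f + fmx g = fmx (fun x => f x + g x).
Proof.
rewrite /fmx -mulmxDl -mulmxDr -raddfD /=; congr (_ *m _ *m _); congr diag_mx.
by apply/matrixP=> i j; rewrite !mxE ord1.
Qed.

Lemma fmxN f : - fmx f = fmx (fun x => - f x).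
Proof.
rewrite /fmx -mulNmx -mulmxN -raddfN /=; congr (_ *m _ *m _); congr diag_mx.
by apply/matrixP=> i j; rewrite !mxE ord1.
Qed.

Lemma fmx1 : fmx (fun _ => 1) = 1%:M.
Proof.
rewrite /fmx. have E : diag_mx (map_mx (fun _ : C => 1) d) = 1%:M :> 'M[C]_N.
  apply/matrixP=> i j. by rewrite !mxE.
by rewrite E mulmx1.
Qed.

Lemma fmx0 : fmx (fun _ => 0) = 0.
Proof.
rewrite /fmx. have -> : diag_mx (map_mx (fun _ : C => 0) d) = 0 :> 'M[C]_N.
  by apply/matrixP=> i j; rewrite !mxE mul0rn.
by rewrite mulmx0 mul0mx.
Qed.

Lemma fmx_id : fmx id = adjmx U *m diag_mx d *m U.
Proof. by rewrite /fmx; congr (_ *m _ *m _); congr diag_mx; apply/matrixP=> i j; rewrite !mxE. Qed.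

Lemma fmx_adj f : adjmx (fmx f) = fmx (fun x => (f x)^*).
Proof.
rewrite /fmx !adjmx_mul adjmxK adjmx_diag mulmxA.
by congr (_ *m _ *m _); congr diag_mx; apply/matrixP=> i j; rewrite !mxE ord1.
Qed.

Lemma fmx_tr f : \tr (fmx f) = \sum_k f (d 0 k).
Proof.
rewrite /fmx mxtrace_mulC mulmxA UU mul1mx mxtrace_diag.
by apply: eq_bigr => k _; rewrite mxE.
Qed.

End Fmx.

Section Sqrt.
Variable C : numClosedFieldType.
Variable N : nat.

Lemma psd_diag_conj (U : 'M[C]_N) (e : 'rV[C]_N) :
  (forall k, 0 <= e 0 k) -> psd (adjmx U *m diag_mx e *m U).
Proof.
move=> He v.
have -> : adjmx v *m (adjmx U *m diag_mx e *m U) *m v =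
          adjmx (U *m v) *m diag_mx e *m (U *m v) by rewrite adjmx_mul !mulmxA.
rewrite mxE; apply: sumr_ge0 => a _; rewrite mxE (bigD1 a) //= big1.
  rewrite addr0 !mxE eqxx mulr1n mulrC mulrA -normCK.
  by rewrite mulr_ge0 // exprn_ge0.
by move=> b /negbTE nb; rewrite [diag_mx _ _ _]mxE nb mulr0n mulr0.
Qed.

Lemma sqrtm_spec (M : 'M[C]_N) : psd M -> psd (sqrtm M) /\ sqrtm M *m sqrtm M = M.
Proof.
move=> HM.
suff Hex : exists S, psd S /\ S *m S = M.
  rewrite /sqrtm; case: excluded_middle_informative => [H|//].
  by case: constructive_indefinite_description.
have [U [d [UU [UU' [Hd HMe]]]]] := psd_spec HM.
exists (fmx U d sqrtC); split.
  by apply: psd_diag_conj => k; rewrite mxE sqrtC_ge0.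
rewrite fmx_mul // HMe -fmx_id; apply: fmx_ext => k.
by rewrite -expr2 sqrtCK.
Qed.

End Sqrt.

Section Factor.
Variable C : numClosedFieldType.
Variable N : nat.

Lemma psd_mul_adj m (B : 'M[C]_(N, m)) : psd (B *m adjmx B).
Proof.
move=> v.
have -> : adjmx v *m (B *m adjmx B) *m v = (adjmx v *m B) *m adjmx (adjmx v *m B).
  by rewrite adjmx_mul adjmxK !mulmxA.
exact: mul_adj_diag_ge0.
Qed.

Lemma psd_conj (S M : 'M[C]_N) : psd M -> psd (adjmx S *m M *m S).
Proof.
move=> HM v; have := HM (S *m v).
by rewrite adjmx_mul !mulmxA.
Qed.

Lemma inv_mul_id (x : C) : x * x^-1 * x = x.
Proof. by have [->|nz] := eqVneq x 0; [rewrite !mul0r | rewrite mulfV // mul1r]. Qed.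

Lemma mul_inv_idem (x : C) : x * x^-1 * (x * x^-1) = x * x^-1.
Proof. by have [->|nz] := eqVneq x 0; [rewrite !mul0r | rewrite mulfV // mul1r]. Qed.

Variables (Q U : 'M[C]_N) (q : 'rV[C]_N).
Hypothesis HQ : spec Q U q.

Definition Pm := fmx U q (fun x => x * x^-1).
Definition Qp := fmx U q (fun x => x^-1).

Lemma Q_fmx : Q = fmx U q id.
Proof. by case: HQ => _ [_ [_ ->]]; rewrite fmx_id. Qed.

Lemma UUs : U *m adjmx U = 1%:M. Proof. by case: HQ. Qed.

Lemma q_conj i k : (q i k)^* = q i k.
Proof. by case: HQ => _ [_ [H _]]; rewrite ord1 geC0_conj. Qed.

Lemma Pm_adj : adjmx Pm = Pm.
Proof.
rewrite /Pm fmx_adj; apply: fmx_ext => k.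
by rewrite rmorphM fmorphV /= !q_conj.
Qed.

Lemma Pm_idem : Pm *m Pm = Pm.
Proof. by rewrite /Pm fmx_mul ?UUs //; apply: fmx_ext => k; rewrite mul_inv_idem. Qed.

Lemma Pm_Q : Pm *m Q = Q.
Proof. by rewrite Q_fmx /Pm fmx_mul ?UUs //; apply: fmx_ext => k; rewrite inv_mul_id. Qed.

Lemma Q_Qp : Q *m Qp = Pm.
Proof. by rewrite Q_fmx /Pm fmx_mul ?UUs. Qed.

Lemma Qp_adj : adjmx Qp = Qp.
Proof. by rewrite /Qp fmx_adj; apply: fmx_ext => k; rewrite fmorphV /= q_conj. Qed.

Lemma Q_adj : adjmx Q = Q.
Proof. by rewrite Q_fmx fmx_adj; apply: fmx_ext => k; rewrite q_conj. Qed.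

Lemma Qp_QQ_Qp : Qp *m (Q *m Q) *m Qp = Pm.
Proof.
rewrite Q_fmx /Qp /Pm !fmx_mul ?UUs //; apply: fmx_ext => k /=.
have [->|nz] := eqVneq (q 0 k) 0; first by rewrite invr0 !(mulr0, mul0r).
by field.
Qed.

Lemma IPm_adj : adjmx (1%:M - Pm) = 1%:M - Pm.
Proof. by rewrite adjmxB adjmx1 Pm_adj. Qed.

Lemma IPm_idem : (1%:M - Pm) *m (1%:M - Pm) = 1%:M - Pm.
Proof. by rewrite mulmxBl !mulmxBr ?mul1mx ?mulmx1 Pm_idem subrr subr0. Qed.

Lemma IPm_Q : (1%:M - Pm) *m Q = 0.
Proof. by rewrite mulmxBl mul1mx Pm_Q subrr. Qed.

Lemma Q_IPm : Q *m (1%:M - Pm) = 0.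
Proof.
apply: (can_inj (@adjmxK _ _ _)); rewrite adjmx_mul IPm_adj Q_adj IPm_Q.
by rewrite adjmx0.
Qed.

Lemma factor m (Y : 'M[C]_(N, m)) : Y *m adjmx Y = Q *m Q ->
  Y = Q *m (Qp *m Y) /\ (Qp *m Y) *m adjmx (Qp *m Y) = Pm.
Proof.
move=> HY.
have HZ : (1%:M - Pm) *m Y = 0.
  apply: mul_adj_eq0; rewrite adjmx_mul IPm_adj mulmxA -(mulmxA _ Y) HY.
  by rewrite mulmxA IPm_Q !mul0mx.
split.
  rewrite mulmxA Q_Qp; apply/eqP; rewrite -subr_eq0 -{1}[Y]mul1mx -mulmxBl.
  by apply/eqP.
by rewrite adjmx_mul Qp_adj mulmxA -(mulmxA _ Y) HY Qp_QQ_Qp.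
Qed.

End Factor.

Lemma proj_diag_le1 (C : numClosedFieldType) N (P W : 'M[C]_N) k :
  adjmx P = P -> P *m P = P ->
  W *m adjmx W = 1%:M -> ((W *m P) *m adjmx W) k k <= 1.
Proof.
move=> Ph Pi HW.
have Ih : adjmx (1%:M - P) = 1%:M - P by rewrite adjmxB adjmx1 Ph.
have Ii : (1%:M - P) *m (1%:M - P) = 1%:M - P.
  by rewrite mulmxBl !mulmxBr ?mul1mx ?mulmx1 Pi subrr subr0.
have E2 : (W *m (1%:M - P)) *m adjmx (W *m (1%:M - P)) =
          1%:M - (W *m P) *m adjmx W.
  rewrite adjmx_mul Ih -mulmxA (mulmxA (1%:M - P)) Ii.
  by rewrite mulmxBl mul1mx mulmxBr HW mulmxA.
have := mul_adj_diag_ge0 (W *m (1%:M - P)) k.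
by rewrite E2 !mxE eqxx mulr1n subr_ge0.
Qed.

Section UL.
Variable C : numClosedFieldType.
Variable N : nat.

Lemma amgm (a b : C) : `|a * b^*| * 2 <= `|a| ^+ 2 + `|b| ^+ 2.
Proof.
rewrite normrM norm_conjC.
have : 0 <= (`|a| - `|b|) ^+ 2 by apply: real_exprn_even_ge0 => //; rewrite realB.
set x := `|a|; set y := `|b|.
have Hx : x \is Num.real by apply: normr_real.
have Hy : y \is Num.real by apply: normr_real.
move=> H; rewrite -subr_ge0.
have -> : x ^+ 2 + y ^+ 2 - x * y * 2 = (x - y) ^+ 2 by ring.
done.
Qed.

Lemma diag_bound m (X Y : 'M[C]_(N, m)) k :
  (X *m adjmx X) k k <= 1 -> (Y *m adjmx Y) k k <= 1 ->
  `|(X *m adjmx Y) k k| <= 1.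
Proof.
move=> HX HY.
have H2 : `|(X *m adjmx Y) k k| * 2 <= (X *m adjmx X) k k + (Y *m adjmx Y) k k.
  rewrite !mul_adj_diag mxE -big_split /=.
  apply: le_trans; first by apply: ler_wpM2r; [done| apply: ler_norm_sum].
  rewrite mulr_suml; apply: ler_sum => j _.
  by rewrite adjmxE amgm.
have : `|(X *m adjmx Y) k k| * 2 <= 1 * 2.
  by apply: le_trans H2 _; rewrite mul1r -[2]/(1 + 1) lerD.
by rewrite ler_pM2r.
Qed.

End UL.

Section UL2.
Variable C : numClosedFieldType.
Variable N : nat.

Lemma tr_diag_mul (t : 'rV[C]_N) (M : 'M[C]_N) :
  \tr (diag_mx t *m M) = \sum_k t 0 k * M k k.
Proof. by rewrite /mxtrace; apply: eq_bigr => k _; rewrite mul_diag_mx mxE. Qed.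

Lemma tr_spec (T U : 'M[C]_N) t : spec T U t -> \tr T = \sum_k t 0 k.
Proof.
move=> [UU [_ [_ ->]]]; rewrite mxtrace_mulC mulmxA UU mul1mx mxtrace_diag.
done.
Qed.

Lemma UL (rho : 'M[C]_N) m (A B : 'M[C]_(N, m)) : psd rho -> A *m adjmx A = rho ->
  `|\tr (adjmx A *m B)| <= \tr (sqrtm (sqrtm rho *m (B *m adjmx B) *m sqrtm rho)).
Proof.
move=> Hr HA.
have [HS HSS] := sqrtm_spec Hr.
move: HS HSS; set S := sqrtm rho => HS HSS.
have Sh := psd_herm HS.
have [US [s HSs]] := psd_spec HS.
have HAA : A *m adjmx A = S *m S by rewrite HA HSS.
have [HAf HWW] := factor HSs HAA.
have PSh := Pm_adj HSs; have PSi := Pm_idem HSs.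
move: HAf HWW PSh PSi; set W := Qp US s *m A; set PS := Pm US s => HAf HWW PSh PSi.
have HT : psd (S *m (B *m adjmx B) *m S).
  by rewrite -{1}Sh; apply: psd_conj; apply: psd_mul_adj.
have [HTp HTT] := sqrtm_spec HT.
move: HTp HTT; set T := sqrtm _ => HTp HTT.
have [UT [t HTt]] := psd_spec HTp.
have HX : (S *m B) *m adjmx (S *m B) = T *m T by rewrite HTT adjmx_mul Sh !mulmxA.
have [HXf HVV] := factor HTt HX.
have PTh := Pm_adj HTt; have PTi := Pm_idem HTt.
move: HXf HVV PTh PTi; set V := Qp UT t *m (S *m B); set PT := Pm UT t => HXf HVV PTh PTi.
have Etr : \tr (adjmx A *m B) = \tr (T *m (V *m adjmx W)).
  by rewrite HAf adjmx_mul Sh -mulmxA HXf mxtrace_mulC -mulmxA.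
rewrite Etr (tr_spec HTt).
clearbody V W PS PT.
have [UTu [UTu' [Ht HTe]]] := HTt.
rewrite HTe -!mulmxA mxtrace_mulC -mulmxA tr_diag_mul.
apply: le_trans; first exact: ler_norm_sum.
apply: ler_sum => k _.
rewrite normrM (ger0_norm (Ht k)) -[X in _ <= X]mulr1; apply: ler_wpM2l => //.
have -> : UT *m (V *m adjmx W) *m adjmx UT = (UT *m V) *m adjmx (UT *m W).
  by rewrite adjmx_mul !mulmxA.
apply: diag_bound.
  rewrite adjmx_mul mulmxA -(mulmxA UT V) HVV.
  exact: proj_diag_le1.
rewrite adjmx_mul mulmxA -(mulmxA UT W) HWW.
exact: proj_diag_le1.
Qed.

End UL2.

Section UE.
Variable C : numClosedFieldType.
Variable N : nat.

Lemma UE (rho : 'M[C]_N) m (B : 'M[C]_(N, m)) (e : 'I_N -> 'I_m) :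
  psd rho -> injective e -> (forall a k, B a (e k) = 0) ->
  exists A : 'M[C]_(N, m), A *m adjmx A = rho /\
    \tr (adjmx A *m B) = \tr (sqrtm (sqrtm rho *m (B *m adjmx B) *m sqrtm rho)).
Proof.
move=> Hr einj Be.
have [HS HSS] := sqrtm_spec Hr.
move: HS HSS; set S := sqrtm rho => HS HSS.
have Sh := psd_herm HS.
have HT : psd (S *m (B *m adjmx B) *m S).
  by rewrite -{1}Sh; apply: psd_conj; apply: psd_mul_adj.
have [HTp HTT] := sqrtm_spec HT.
move: HTp HTT; set T := sqrtm _ => HTp HTT.
have [UT [t HTt]] := psd_spec HTp.
have HX : (S *m B) *m adjmx (S *m B) = T *m T by rewrite HTT adjmx_mul Sh !mulmxA.
have [HXf HVV] := factor HTt HX.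
have PTh := Pm_adj HTt; have PTi := Pm_idem HTt; have PTT := Pm_Q HTt.
have IPh := IPm_adj HTt; have IPi := IPm_idem HTt.
set E : 'M[C]_(N, m) := \matrix_(k, j) ((e k == j)%:R).
have EE : E *m adjmx E = 1%:M.
  apply/matrixP=> k l; rewrite !mxE (bigD1 (e k)) //= big1.
    rewrite /adjmx !mxE eqxx rmorph_nat (inj_eq einj) eq_sym mul1r addr0.
    by case: (k == l).
  by move=> j /negbTE nj; rewrite !mxE eq_sym nj mul0r.
have BE : B *m adjmx E = 0.
  apply/matrixP=> a k; rewrite !mxE (bigD1 (e k)) //= big1.
    by rewrite /adjmx !mxE eqxx rmorph_nat Be mul0r addr0.
  by move=> j /negbTE nj; rewrite /adjmx !mxE eq_sym nj rmorph0 mulr0.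
have VE : (Qp UT t *m (S *m B)) *m adjmx E = 0.
  by rewrite -!mulmxA BE !mulmx0.
move: HXf HVV PTh PTi PTT IPh IPi VE.
set V := Qp UT t *m (S *m B); set PT := Pm UT t => HXf HVV PTh PTi PTT IPh IPi VE.
clearbody V PT E.
set Z := (1%:M - PT) *m E.
have VZ : V *m adjmx Z = 0 by rewrite adjmx_mul mulmxA VE mul0mx.
have ZV : Z *m adjmx V = 0.
  by apply: (can_inj (@adjmxK _ _ _)); rewrite adjmx_mul adjmxK VZ adjmx0.
have ZZ : Z *m adjmx Z = 1%:M - PT.
  by rewrite adjmx_mul IPh mulmxA -(mulmxA _ E) EE mulmx1 IPi.
set W := V + Z.
have WW : W *m adjmx W = 1%:M.
  rewrite adjmxD mulmxDl !mulmxDr HVV VZ ZV ZZ addr0 add0r.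
  by rewrite addrC subrK.
exists (S *m W); split.
  by rewrite adjmx_mul mulmxA -(mulmxA S) WW mulmx1 Sh HSS.
rewrite adjmx_mul Sh -mulmxA HXf mxtrace_mulC -mulmxA.
rewrite adjmxD mulmxDr HVV VZ addr0 mxtrace_mulC PTT.
done.
Qed.

End UE.

Section Inf.
Variable C : numClosedFieldType.
Hypothesis HC : real_complete C.

Lemma infC_glb (A : C -> Prop) : (exists x, A x) -> (forall x, A x -> x \is Num.real) ->
  (exists l, forall x, A x -> l <= x) -> is_glb A (infC A).
Proof.
move=> H1 H2 H3; rewrite /infC; case: excluded_middle_informative => [H|H].
  by case: constructive_indefinite_description.
by exfalso; apply: H; apply: HC.
Qed.

Lemma infC_empty (A : C -> Prop) : (forall x, ~ A x) -> infC A = 0.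
Proof.
move=> H; rewrite /infC; case: excluded_middle_informative => [Hex|//].
exfalso; case: Hex => g [_ Hg].
have := Hg (g + 1) (fun x Ax => False_ind _ (H x Ax)).
by rewrite gerDl ler10.
Qed.

Lemma glb_unique (A : C -> Prop) g1 g2 : is_glb A g1 -> is_glb A g2 -> g1 = g2.
Proof.
move=> [H1 H1'] [H2 H2']; apply/le_anti; apply/andP; split.
  exact: H2'.
exact: H1'.
Qed.

Lemma glb_real (A : C -> Prop) g x : is_glb A g -> A x -> x \is Num.real ->
  (exists l, l \is Num.real /\ forall x, A x -> l <= x) -> g \is Num.real.
Proof.
move=> [Hl Hg] Ax xr [l [lr Hlb]].
have lg := Hg l Hlb; have gx := Hl x Ax.
have H : g - l \is Num.real by apply: ger0_real; rewrite subr_ge0.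
by rewrite -[g](subrK l) realD.
Qed.

Lemma le_eps (x y : C) : x \is Num.real -> y \is Num.real ->
  (forall e, 0 < e -> x <= y + e) -> x <= y.
Proof.
move=> xr yr H; rewrite real_leNgt //; apply/negP => yx.
have e0 : 0 < (x - y) / 2 by rewrite divr_gt0 // subr_gt0.
have := H _ e0; rewrite -subr_ge0.
have -> : y + (x - y) / 2 - x = - ((x - y) / 2) by field.
by rewrite oppr_ge0 => Hc; have := lt_le_trans e0 Hc; rewrite ltxx.
Qed.

Lemma glb_approx (A : C -> Prop) g e : is_glb A g -> (forall x, A x -> x \is Num.real) ->
  g \is Num.real -> 0 < e -> exists x, A x /\ x <= g + e.
Proof.
move=> [Hl Hg] Ar gr e0; apply: NNPP => Hn.
have : g + e <= g.
  apply: Hg => x Ax.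
  have xr := Ar x Ax.
  have : ~ (x <= g + e) by move=> H; apply: Hn; exists x.
  move/negP; rewrite real_leNgt ?negbK; [exact: ltW | done |].
  by rewrite realD // gtr0_real.
by rewrite gerDl => Hc; have := lt_le_trans e0 Hc; rewrite ltxx.
Qed.

Lemma infC_eq (R G : C -> Prop) :
  (exists x, R x) -> (forall x, R x -> 0 <= x) ->
  (exists y, G y) -> (forall y, G y -> y \is Num.real) ->
  (forall y, G y -> exists x, R x /\ x <= y) ->
  (forall x e, R x -> 0 < e -> exists y, G y /\ y <= x + e) ->
  infC R = infC G.
Proof.
move=> [x0 Rx0] R0 [y0 Gy0] Gr HGR HRG.
have Rr : forall x, R x -> x \is Num.real by move=> x /R0/ger0_real.
have gR := infC_glb (ex_intro _ x0 Rx0) Rr (ex_intro _ 0 R0).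
have Gb : forall y, G y -> 0 <= y.
  by move=> y Gy; have [x [Rx xy]] := HGR y Gy; apply: le_trans (R0 _ Rx) xy.
have gG := infC_glb (ex_intro _ y0 Gy0) Gr (ex_intro _ 0 Gb).
have rR : infC R \is Num.real.
  by apply: (glb_real gR Rx0 (Rr _ Rx0)); exists 0; split => //; exact: real0.
have rG : infC G \is Num.real.
  by apply: (glb_real gG Gy0 (Gr _ Gy0)); exists 0; split => //; exact: real0.
apply/le_anti; apply/andP; split.
  case: gG => _ HG; apply: HG => y Gy.
  have [x [Rx xy]] := HGR y Gy; apply: le_trans xy.
  by case: gR => H _; apply: H.
case: gR => _ HR; apply: HR => x Rx.
apply: le_eps => //; first exact: Rr.
move=> e e0; have [y [Gy ye]] := HRG x e Rx e0.
by apply: le_trans ye; case: gG => H _; apply: H.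
Qed.

End Inf.

Section Seqs.
Variable C : numClosedFieldType.

Lemma sum_nth (V : zmodType) T (s : seq T) x0 m (F : T -> V) : (size s <= m)%N -> F x0 = 0 ->
  \sum_(pv <- s) F pv = \sum_(j < m) F (nth x0 s j).
Proof.
move=> sm F0; rewrite (big_nth x0) -(big_mkord xpredT (fun j => F (nth x0 s j))).
rewrite (big_cat_nat (leq0n (size s)) sm) /= [X in _ + X]big1_seq ?addr0 //.
move=> j /andP[_]; rewrite mem_index_iota => /andP[sj _].
by rewrite nth_default.
Qed.


Lemma sum_map_enum (V : zmodType) T m (f : 'I_m -> T) (F : T -> V) :
  \sum_(pv <- [seq f j | j <- enum 'I_m]) F pv = \sum_j F (f j).
Proof. by rewrite big_map big_enum. Qed.

End Seqs.

Section Vec.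
Variable C : numClosedFieldType.
Variable N : nat.

Lemma inner_conj (phi psi : 'cV[C]_N) : inner psi phi = (inner phi psi)^*.
Proof.
by rewrite /inner -adjmxE adjmx_mul adjmxK.
Qed.

Lemma inner_le1 (phi psi : 'cV[C]_N) : normalized phi -> normalized psi ->
  `|inner phi psi| <= 1.
Proof.
move=> Hp Hs.
have := @diag_bound C 1 N (adjmx phi) (adjmx psi) 0.
rewrite !adjmxK; apply.
  by move: Hp; rewrite /normalized /inner => ->.
by move: Hs; rewrite /normalized /inner => ->.
Qed.

Lemma inner_ge0 (phi : 'cV[C]_N) : 0 <= inner phi phi.
Proof.
have := @mul_adj_diag_ge0 C 1 N (adjmx phi) 0.
by rewrite adjmxK.
Qed.

Definition colmx m (a : 'I_m -> C) (v : 'I_m -> 'cV[C]_N) : 'M[C]_(N, m) :=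
  \matrix_(i, j) (a j * v j i 0).


Lemma colmx_adj m a b (v w : 'I_m -> 'cV[C]_N) :
  colmx a v *m adjmx (colmx b w) = \sum_j (a j * (b j)^*) *: (v j *m adjmx (w j)).
Proof.
apply/matrixP=> i k; rewrite summxE !mxE; apply: eq_bigr => j _.
rewrite !mxE big_ord1 /adjmx !mxE rmorphM; ring.
Qed.

Lemma colmx_tr m a b (v w : 'I_m -> 'cV[C]_N) :
  \tr (adjmx (colmx a v) *m colmx b w) = \sum_j (a j)^* * b j * inner (v j) (w j).
Proof.
rewrite /mxtrace; apply: eq_bigr => j _.
rewrite /inner !mxE mulr_sumr; apply: eq_bigr => i _.
rewrite /adjmx !mxE rmorphM; ring.
Qed.

End Vec.

Section Helpers.
Variable C : numClosedFieldType.
Variable N : nat.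

Lemma sqrtC_conj (p : C) : 0 <= p -> (sqrtC p)^* = sqrtC p.
Proof. by move=> p0; rewrite geC0_conj // sqrtC_ge0. Qed.

Lemma sqrtC_sq (p : C) : sqrtC p * sqrtC p = p.
Proof. by rewrite -expr2 sqrtCK. Qed.

Lemma tr_proj (v : 'cV[C]_N) : \tr (proj v) = inner v v.
Proof. by rewrite /proj mxtrace_mulC /inner /mxtrace big_ord1. Qed.

Lemma inner_scale (a : C) (v : 'cV[C]_N) : inner (a *: v) (a *: v) = a^* * a * inner v v.
Proof. by rewrite /inner adjmxZ -scalemxAl -scalemxAr !mxE mulrA. Qed.

Lemma tr_sqrtm_ge0 (X : 'M[C]_N) : 0 <= \tr (sqrtm X).
Proof.
rewrite /sqrtm; case: excluded_middle_informative => [H|_]; last by rewrite mxtrace0.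
case: constructive_indefinite_description => S [HS _] /=.
have [U [d Hs]] := psd_spec HS.
rewrite (tr_spec Hs); apply: sumr_ge0 => k _.
by case: Hs => _ [_ [H0 _]].
Qed.

Lemma tr_sum_scale I (r : seq I) (a : I -> C) (M : I -> 'M[C]_N) :
  \tr (\sum_(i <- r) a i *: M i) = \sum_(i <- r) a i * \tr (M i).
Proof.
elim: r => [|i r IH]; first by rewrite !big_nil mxtrace0.
by rewrite !big_cons mxtraceD mxtraceZ IH.
Qed.

Definition phase (z : C) := if z == 0 then 1 else z / `|z|.

Lemma phase_norm z : phase z * (phase z)^* = 1.
Proof.
rewrite /phase; case: eqP => [_|/eqP nz]; first by rewrite rmorph1 mulr1.
rewrite rmorphM fmorphV /= (geC0_conj (normr_ge0 z)).
have n0 : `|z| != 0 by rewrite normr_eq0.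
have E : z / `|z| * (z^* / `|z|) = (z * z^*) / (`|z| ^+ 2) by field.
by rewrite E -normCK divff // expf_neq0.
Qed.

Lemma phase_conj z : phase z * z^* = `|z|.
Proof.
rewrite /phase; case: eqP => [->|/eqP nz]; first by rewrite rmorph0 mulr0 normr0.
have n0 : `|z| != 0 by rewrite normr_eq0.
have E : z / `|z| * z^* = (z * z^*) / `|z| by field.
by rewrite E -normCK expr2 mulfK.
Qed.

Lemma cs_aux m (b a : 'I_m -> C) : (forall j, 0 <= b j) -> (forall j, 0 <= a j) ->
  \sum_j b j ^+ 2 = 1 -> (\sum_j b j * a j) ^+ 2 <= \sum_j a j ^+ 2.
Proof.
move=> b0 a0 b1; set Y := \sum_j b j * a j.
have Y0 : 0 <= Y by apply: sumr_ge0 => j _; rewrite mulr_ge0.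
have H : forall j, Y * (b j * a j) * 2 <= Y ^+ 2 * b j ^+ 2 + a j ^+ 2.
  move=> j; rewrite -subr_ge0.
  have -> : Y ^+ 2 * b j ^+ 2 + a j ^+ 2 - Y * (b j * a j) * 2 = (Y * b j - a j) ^+ 2 by ring.
  apply: real_exprn_even_ge0 => //; apply: realB; apply: ger0_real => //.
  exact: mulr_ge0.
have : Y * Y * 2 <= Y ^+ 2 * (\sum_j b j ^+ 2) + \sum_j a j ^+ 2.
  rewrite {1}/Y !mulr_suml mulr_sumr -big_split /=; apply: ler_sum => j _.
  by rewrite (mulrC (b j * a j)); apply: H.
rewrite b1 mulr1 -expr2 -[2]/(1 + 1) mulrDr mulr1 lerD2l.
done.
Qed.

End Helpers.

Section Main.
Variable C : numClosedFieldType.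
Hypothesis HC : real_complete C.
Variable N : nat.
Variable S : 'cV[C]_N -> Prop.
Variable rho : 'M[C]_N.
Hypothesis Hrho : density rho.
Variable phi0 : 'cV[C]_N.
Hypothesis Sphi0 : S phi0.
Hypothesis Nphi0 : normalized phi0.

Definition gpset (psi : 'cV[C]_N) :=
  fun x => exists phi, S phi /\ normalized phi /\ x = 1 - `|inner phi psi| ^+ 2.

Lemma sq_inner_le1 (phi psi : 'cV[C]_N) : normalized phi -> normalized psi ->
  0 <= 1 - `|inner phi psi| ^+ 2.
Proof.
move=> Hp Hs; rewrite subr_ge0; apply: exprn_ile1 => //.
exact: inner_le1.
Qed.

Lemma gp_glb (psi : 'cV[C]_N) : normalized psi -> is_glb (gpset psi) (geo_pure S psi).
Proof.
move=> Hs; apply: infC_glb => //.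
- by exists (1 - `|inner phi0 psi| ^+ 2); exists phi0.
- move=> x [phi [_ [Hp ->]]]; apply: ger0_real; exact: sq_inner_le1.
- by exists 0 => x [phi [_ [Hp ->]]]; exact: sq_inner_le1.
Qed.

Lemma gp_ge0 (psi : 'cV[C]_N) : normalized psi -> 0 <= geo_pure S psi.
Proof.
move=> Hs; have [_ H] := gp_glb Hs; apply: H => x [phi [_ [Hp ->]]].
exact: sq_inner_le1.
Qed.

Lemma gp_le (psi phi : 'cV[C]_N) : normalized psi -> S phi -> normalized phi ->
  geo_pure S psi <= 1 - `|inner phi psi| ^+ 2.
Proof.
move=> Hs Sp Np; have [H _] := gp_glb Hs; apply: H.
by exists phi.
Qed.

Definition Rset := fun x => exists s, pure_decomp rho s /\
                   x = \sum_(pv <- s) pv.1 * geo_pure S pv.2.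
Definition Gset := fun x => exists sigma, mixed_hull S sigma /\ x = 1 - fidelity rho sigma.

Lemma dir_d sigma : mixed_hull S sigma -> exists x, Rset x /\ x <= 1 - fidelity rho sigma.
Proof.
case=> s [Hs [Hsum Hsig]].
have [Hpsd Htr1] := Hrho.
pose x0 := ((0 : C), phi0).
pose m := (size s + N)%N.
pose q (j : 'I_m) := (nth x0 s j).1.
pose phi (j : 'I_m) := (nth x0 s j).2.
have Hq : forall j, 0 <= q j /\ normalized (phi j) /\ S (phi j).
  move=> j; rewrite /q /phi; case: (ltnP j (size s)) => js.
    exact: (Hs _ (mem_nth x0 js)).
  by rewrite nth_default.
pose B := colmx (fun j => sqrtC (q j)) phi.
have HB : B *m adjmx B = sigma.
  rewrite /B colmx_adj Hsig (@sum_nth _ _ s x0 m) ?leq_addr ?scale0r //.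
  apply: eq_bigr => j _; rewrite sqrtC_conj ?sqrtC_sq //; by case: (Hq j).
pose e (k : 'I_N) : 'I_m := rshift (size s) k.
have einj : injective e by apply: rshift_inj.
have Be : forall a k, B a (e k) = 0.
  move=> a k; rewrite /B /colmx mxE /q /e /= nth_default ?sqrtC0 ?mul0r //.
  exact: leq_addr.
have [A [HA Htr]] := UE Hpsd einj Be.
rewrite HB in Htr.
pose p (j : 'I_m) := (adjmx A *m A) j j.
have Hp : forall j, p j = \sum_a `|A a j| ^+ 2.
  move=> j; rewrite /p -{2}[A]adjmxK mul_adj_diag; apply: eq_bigr => a _.
  by rewrite adjmxE norm_conjC.
have p0 : forall j, 0 <= p j.
  by move=> j; rewrite Hp; apply: sumr_ge0 => a _; exact: exprn_ge0.
pose psi (j : 'I_m) := if p j == 0 then phi0 else (sqrtC (p j))^-1 *: col j A.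
have HAc : A = colmx (fun j => sqrtC (p j)) psi.
  apply/matrixP => a j; rewrite /colmx mxE /psi.
  case: eqP => [pj0|/eqP pj0].
    rewrite pj0 sqrtC0 mul0r.
    have := Hp j; rewrite pj0 => /esym/eqP; rewrite psumr_eq0 => [|k _]; last exact: exprn_ge0.
    move=> /allP/(_ a (mem_index_enum _)); rewrite expf_eq0 /= normr_eq0.
    by move/eqP.
  by rewrite !mxE mulrA mulfV ?mul1r // sqrtC_eq0.
have Hpsi : forall j, normalized (psi j).
  move=> j; rewrite /psi; case: eqP => [_|/eqP pj0] //.
  rewrite /normalized inner_scale fmorphV /= sqrtC_conj //.
  have -> : inner (col j A) (col j A) = p j.
    by rewrite /inner /p !mxE; apply: eq_bigr => a _; rewrite /adjmx !mxE.
  by rewrite -invfM sqrtC_sq mulVf.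
pose s' := [seq (p j, psi j) | j <- enum 'I_m].
exists (\sum_j p j * geo_pure S (psi j)); split.
  exists s'; split; last by rewrite sum_map_enum.
  split.
    by move=> pv /mapP [j _ ->] /=; split; [exact: p0 | exact: Hpsi].
  rewrite sum_map_enum -HA {1 2}HAc colmx_adj; apply: eq_bigr => j _.
  by rewrite sqrtC_conj // sqrtC_sq.
rewrite /fidelity; set TT := \tr _.
have TT0 : 0 <= TT := tr_sqrtm_ge0 _.
have Etr : TT = \sum_j sqrtC (p j) * sqrtC (q j) * inner (psi j) (phi j).
  rewrite /TT -Htr {1}HAc colmx_tr; apply: eq_bigr => j _.
  by rewrite sqrtC_conj.
pose c j := `|inner (phi j) (psi j)|.
have HY : TT <= \sum_j sqrtC (q j) * (sqrtC (p j) * c j).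
  rewrite -(ger0_norm TT0) Etr; apply: le_trans (ler_norm_sum _ _ _) _.
  apply: ler_sum => j _.
  rewrite !normrM (@ger0_norm _ (sqrtC (p j))) ?sqrtC_ge0 // (@ger0_norm _ (sqrtC (q j))) ?sqrtC_ge0 ?(proj1 (Hq j)) // inner_conj norm_conjC.
  by rewrite /c mulrCA mulrA lexx.
have Hsq : \sum_j sqrtC (q j) ^+ 2 = 1.
  rewrite -Hsum (@sum_nth _ _ s x0 m) ?leq_addr //.
  by apply: eq_bigr => j _; rewrite sqrtCK.
have HYsq : (\sum_j sqrtC (q j) * (sqrtC (p j) * c j)) ^+ 2 <= \sum_j p j * c j ^+ 2.
  have := @cs_aux C m (fun j => sqrtC (q j)) (fun j => sqrtC (p j) * c j).
  have Hb : forall j, 0 <= sqrtC (q j) by move=> j; rewrite sqrtC_ge0; case: (Hq j).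
  have Ha : forall j, 0 <= sqrtC (p j) * c j by move=> j; rewrite mulr_ge0 ?sqrtC_ge0 ?p0 ?normr_ge0.
  move=> H; apply: le_trans (H Hb Ha Hsq) _.
  by rewrite le_eqVlt; apply/orP; left; apply/eqP; apply: eq_bigr => j _; rewrite exprMn sqrtCK.
have Hsump : \sum_j p j = 1.
  by rewrite -Htr1 -HA mxtrace_mulC.
have Hc : forall j, p j * c j ^+ 2 <= p j * (1 - geo_pure S (psi j)).
  move=> j; apply: ler_wpM2l; first exact: p0.
  have := gp_le (Hpsi j) (proj2 (proj2 (Hq j))) (proj1 (proj2 (Hq j))).
  by rewrite !lerBrDr addrC.
have HF : TT ^+ 2 <= \sum_j p j * c j ^+ 2.
  apply: le_trans HYsq; rewrite !expr2; apply: ler_pM => //.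
apply: le_trans (_ : _ <= 1 - \sum_j p j * c j ^+ 2) _; last by rewrite lerB.
rewrite lerBrDr -big_split /= -Hsump; apply: ler_sum => j _.
have := Hc j; rewrite mulrBr mulr1 lerBrDr.
by rewrite addrC.
Qed.

Lemma fid_ge0 sigma : 0 <= fidelity rho sigma.
Proof. by rewrite /fidelity exprn_ge0 // tr_sqrtm_ge0. Qed.

Lemma dir_e x e : Rset x -> 0 < e -> exists y, Gset y /\ y <= x + e.
Proof.
move=> [s [[Hs Hrho_eq] ->]] e0.
have [Hpsd Htr1] := Hrho.
pose x0 := ((0 : C), phi0).
pose m := size s.
pose p (j : 'I_m) := (nth x0 s j).1.
pose psi (j : 'I_m) := (nth x0 s j).2.
have Hp : forall j, 0 <= p j /\ normalized (psi j).
  by move=> j; exact: (Hs _ (mem_nth x0 (ltn_ord j))).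
have Hex : forall j, exists phi, S phi /\ normalized phi /\
    1 - `|inner phi (psi j)| ^+ 2 <= geo_pure S (psi j) + e.
  move=> j; have Hg := gp_glb (proj2 (Hp j)).
  have Hgr : geo_pure S (psi j) \is Num.real.
    by apply: ger0_real; apply: gp_ge0; case: (Hp j).
  have Ar : forall y, gpset (psi j) y -> y \is Num.real.
    by move=> y [phi [_ [Np ->]]]; apply: ger0_real; apply: sq_inner_le1 => //; case: (Hp j).
  have [y [[phi [Sp [Np ->]]] Hle]] := glb_approx Hg Ar Hgr e0.
  by exists phi.
pose phi (j : 'I_m) := proj1_sig (constructive_indefinite_description _ (Hex j)).
have Hphi : forall j, S (phi j) /\ normalized (phi j) /\
    1 - `|inner (phi j) (psi j)| ^+ 2 <= geo_pure S (psi j) + e.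
  by move=> j; rewrite /phi; case: constructive_indefinite_description.
have Hx : \sum_(pv <- s) pv.1 * geo_pure S pv.2 = \sum_j p j * geo_pure S (psi j).
  by rewrite (@sum_nth _ _ s x0 m) ?mul0r.
have Hrho' : rho = \sum_j p j *: proj (psi j).
  by rewrite Hrho_eq (@sum_nth _ _ s x0 m) ?scale0r.
have Hsump : \sum_j p j = 1.
  rewrite -Htr1 Hrho' tr_sum_scale; apply: eq_bigr => j _.
  by rewrite tr_proj (proj2 (Hp j)) mulr1.
rewrite Hx.
pose c j := `|inner (phi j) (psi j)|.
pose T0 := \sum_j p j * c j ^+ 2.
have Hkey : 1 - T0 <= \sum_j p j * geo_pure S (psi j) + e.
  rewrite -{1}Hsump -sumrB -[e]mulr1 -Hsump mulr_sumr -big_split /=.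
  apply: ler_sum => j _.
  have -> : p j - p j * c j ^+ 2 = p j * (1 - c j ^+ 2) by ring.
  have -> : p j * geo_pure S (psi j) + e * p j = p j * (geo_pure S (psi j) + e) by ring.
  apply: ler_wpM2l; first by case: (Hp j).
  by case: (Hphi j) => _ [_ H].
have T00 : 0 <= T0.
  by apply: sumr_ge0 => j _; apply: mulr_ge0; [case: (Hp j) | exact: exprn_ge0 (normr_ge0 _)].
case: (eqVneq T0 0) => [T0z | T0nz].
  exists (1 - fidelity rho (proj phi0)); split.
    exists (proj phi0); split => //; exists [:: (1, phi0)]; split.
      by move=> pv; rewrite inE => /eqP -> /=; split => //; split.
    by rewrite !big_seq1 scale1r.
  apply: le_trans Hkey; rewrite T0z subr0 lerBlDr lerDl.
  exact: fid_ge0.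
have T0p : 0 < T0 by rewrite lt_def T0nz T00.
pose r := sqrtC T0.
have r0 : 0 < r by rewrite sqrtC_gt0.
have rr : r * r = T0 by apply: sqrtC_sq.
pose z j := inner (phi j) (psi j).
pose beta j := sqrtC (p j) * c j / r * phase (z j).
pose A := colmx (fun j => sqrtC (p j)) psi.
pose B := colmx beta phi.
have HA : A *m adjmx A = rho.
  rewrite /A colmx_adj Hrho'; apply: eq_bigr => j _.
  by rewrite sqrtC_conj ?sqrtC_sq //; case: (Hp j).
have k0 : forall j, 0 <= sqrtC (p j) * c j / r.
  move=> j; rewrite divr_ge0 ?(ltW r0) // mulr_ge0 ?normr_ge0 // sqrtC_ge0.
  by case: (Hp j).
pose q j := beta j * (beta j)^*.
have Hq : forall j, q j = p j * c j ^+ 2 / T0.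
  move=> j; rewrite /q /beta rmorphM /= (geC0_conj (k0 j)) mulrACA phase_norm mulr1.
  rewrite -rr; have rn : r != 0 by rewrite gt_eqF.
  have -> : sqrtC (p j) * c j / r * (sqrtC (p j) * c j / r) =
            (sqrtC (p j) * sqrtC (p j)) * c j ^+ 2 / (r * r) by field.
  by rewrite sqrtC_sq.
have Hsig : B *m adjmx B = \sum_j q j *: proj (phi j).
  by rewrite /B colmx_adj.
exists (1 - fidelity rho (B *m adjmx B)); split.
  exists (B *m adjmx B); split => //.
  exists [seq (q j, phi j) | j <- enum 'I_m]; split.
    move=> pv /mapP [j _ ->] /=; split; last by case: (Hphi j) => ? [? _].
    by rewrite /q -normCK exprn_ge0.
  split; last by rewrite Hsig sum_map_enum.
  rewrite sum_map_enum /=; under eq_bigr do rewrite Hq.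
  by rewrite -mulr_suml divff.
have Htr : \tr (adjmx A *m B) = r.
  rewrite /A /B colmx_tr.
  have E : forall j, (sqrtC (p j))^* * beta j * inner (psi j) (phi j) = p j * c j ^+ 2 / r.
    move=> j; rewrite sqrtC_conj; last by case: (Hp j).
    rewrite inner_conj -/(z j) /beta -mulrA -mulrA phase_conj -/(c j).
    have rn : r != 0 by rewrite gt_eqF.
    have -> : sqrtC (p j) * (sqrtC (p j) * c j / r * c j) =
              (sqrtC (p j) * sqrtC (p j)) * c j ^+ 2 / r by field.
    by rewrite sqrtC_sq.
  under eq_bigr do rewrite E.
  rewrite -mulr_suml -/T0 -rr; field; by rewrite gt_eqF.
have HUL := UL B Hpsd HA.
rewrite Htr (gtr0_norm r0) in HUL.
apply: le_trans Hkey; rewrite lerB //.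
rewrite /fidelity -rr expr2; apply: ler_pM => //; exact: ltW.
Qed.

End Main.

Lemma roof_fid (C : numClosedFieldType) (HC : real_complete C) N
   (S : 'cV[C]_N -> Prop) (rho : 'M[C]_N) :
  density rho -> geo_roof S rho = geo_fid S rho.
Proof.
move=> Hrho.
case: (classic (exists phi0, S phi0 /\ normalized phi0)) => [[phi0 [Sp Np]]|Hno].
  have Hull0 : mixed_hull S (proj phi0).
    exists [:: (1, phi0)]; split.
      by move=> pv; rewrite inE => /eqP -> /=; split => //; split.
    by rewrite !big_seq1 scale1r.
  apply: (@infC_eq C HC (Rset S rho) (Gset S rho)).
  - have [x [Rx _]] := dir_d HC Hrho Sp Np Hull0.
    by exists x.
  - move=> x [s [[Hs _] ->]]; rewrite big_seq; apply: sumr_ge0 => pv Hpv.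
    have [H0 Hn] := Hs pv Hpv; apply: mulr_ge0 => //.
    exact: (gp_ge0 HC Sp Np Hn).
  - by exists (1 - fidelity rho (proj phi0)); exists (proj phi0).
  - move=> y [sigma [_ ->]]; apply: realB; first exact: real1.
    by apply: ger0_real; apply: fid_ge0.
  - move=> y [sigma [Hs ->]]; exact: (dir_d HC Hrho Sp Np Hs).
  - move=> x e Rx e0; exact: (dir_e HC Hrho Sp Np Rx e0).
have gp0 : forall psi, geo_pure S psi = 0.
  move=> psi; apply: infC_empty => x [phi [Sphi [Nphi _]]].
  by apply: Hno; exists phi.
have -> : geo_fid S rho = 0.
  apply: infC_empty => x [sigma [[s [Hs [Hsum _]]] _]].
  case: s Hs Hsum => [|pv s] Hs Hsum.
    by move: Hsum; rewrite big_nil => /eqP; rewrite eq_sym oner_eq0.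
  have [_ [Np Sp]] := Hs pv (mem_head _ _).
  by apply: Hno; exists pv.2.
rewrite /geo_roof.
case: (classic (exists x, Rset S rho x)) => [[x0 Rx0]|Hne]; last first.
  by apply: infC_empty => x Rx; apply: Hne; exists x.
have R0 : forall x, Rset S rho x -> x = 0.
  by move=> x [s [_ ->]]; rewrite big1 // => pv _; rewrite gp0 mulr0.
have Hg : is_glb (Rset S rho) (infC (Rset S rho)).
  apply: (infC_glb HC); first by exists x0.
    by move=> x /R0 ->; exact: real0.
  by exists 0 => x /R0 ->.
have H0 : is_glb (Rset S rho) 0.
  split; first by move=> x /R0 ->.
  by move=> l Hl; have := Hl x0 Rx0; rewrite (R0 _ Rx0).
exact: glb_unique Hg H0.
Qed.

Unset Implicit Arguments.

Theorem proposition2 (C : numClosedFieldType) (HC : real_complete C) :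
  (forall (n : nat) (d : 'I_n -> nat) (k : nat) (rho : 'M[C]_#|prodT d|),
     (2 <= k)%N -> density rho ->
     E_G d k rho = geo_fid (k_producible_pure d k.-1) rho) /\
  (forall (D k : nat) (rho : 'M[C]_D),
     (2 <= k)%N -> density rho ->
     C_G k rho = geo_fid (fun psi : 'cV[C]_D => (coh_rank psi <= k.-1)%N) rho).
Proof.
split.
  by move=> n d k rho _ Hr; exact: (roof_fid HC _ Hr).
by move=> D k rho _ Hr; exact: (roof_fid HC _ Hr).
Qed.
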